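(* Let $\mathscr{X}$ be a commutative association scheme with splitting field $\mathbb{F}$, and let $\mathbb{K}_1$ and $\mathbb{K}_2$ be subfields of $\mathbb{F}$. If $\mathscr{X}$ satisfies Property $\mathsf{M}_{\mathbb{K}_1}$ and Property $\mathsf{M}_{\mathbb{K}_2}$, then $\mathscr{X}$ satisfies Property $\mathsf{M}_{\mathbb{K}_1\cap\mathbb{K}_2}$.
   Context: A (commutative) association scheme is a pair $(X,\mathcal{R})$ with $X$ a nonempty finite set and $\mathcal{R}=\{R_0,\ldots,R_d\}$ a partition of $X\times X$ such that $R_0$ is the identity relation, each transpose $R_i^\top$ is some $R_{i'}$, and there are numbers $p_{ij}^k=p_{ji}^k$ such that for every $(a,b)\in R_k$ the number of $c$ with $(a,c)\in R_i$, $(c,b)\in R_j$ is $p_{ij}^k$. Its adjacency matrices $A_0,\ldots,A_d$ are the $0/1$ matrices of the $R_i$; their complex span has a unique basis of primitive idempotents $E_0,\ldots,E_d$ ($E_iE_j=\delta_{ij}E_i$, $\sum_jE_j=I$). The splitting field is $\mathbb{Q}$ with all eigenvalues of $A_1,\ldots,A_d$ adjoined. For a field $\mathbb{K}\subseteq\mathbb{C}$, $\mathcal{E}_\mathbb{K}=\{\sum_{j=0}^d c_jE_j: c_j\in\{0,1\},\ \text{all entries in }\mathbb{K}\}$, and $\mathbb{K}[\mathcal{E}_\mathbb{K}]$ is its $\mathbb{K}$-span. The scheme has Property $\mathsf{M}_\mathbb{K}$ if $\mathbb{K}[\mathcal{E}_\mathbb{K}]$ is closed under Schur (entrywise) multiplication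 (equivalently, the complex span of $\mathcal{E}_\mathbb{K}$ is the Bose-Mesner algebra of a fusion scheme of $\mathscr{X}$). *)

(* Defs.v *)
From mathcomp Require Import all_boot all_order all_algebra all_field.
Set Implicit Arguments. Unset Strict Implicit. Unset Printing Implicit Defensive.
Import GRing.Theory Num.Theory.
Local Open Scope ring_scope.

(* The scheme lives on the point set X = 'I_n; a partition of X x X into
   d+1 classes R_0..R_d is encoded by R : X -> X -> 'I_d.+1
   (R x y = i  iff  (x,y) \in R_i). *)

Definition adjmx n d (R : 'I_n -> 'I_n -> 'I_d.+1) (i : 'I_d.+1) : 'M[algC]_n :=
  \matrix_(x, y) ((R x y == i)%:R).

Definition comm_assoc_scheme n d (R : 'I_n -> 'I_n -> 'I_d.+1) : Prop :=
  [/\ (0 < n)%N,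
      (forall x y, R x y = ord0 <-> x = y),
      (forall i, exists x y, R x y = i),
      (forall i, exists i', forall x y, R y x = i' <-> R x y = i) &
      (* intersection numbers p_ij^k = p_ji^k *)
      (forall i j k, exists p : nat, forall a b, R a b = k ->
          #|[set c | (R a c == i) && (R c b == j)]| = p /\
          #|[set c | (R a c == j) && (R c b == i)]| = p)].

Definition in_BM n d (R : 'I_n -> 'I_n -> 'I_d.+1) (M : 'M[algC]_n) : Prop :=
  exists c : 'I_d.+1 -> algC, M = \sum_i c i *: adjmx R i.

Definition prim_idems n d (R : 'I_n -> 'I_n -> 'I_d.+1)
    (E : 'I_d.+1 -> 'M[algC]_n) : Prop :=
  [/\ (forall j, in_BM R (E j)),
      (forall j, E j != 0),
      (forall i j, E i *m E j = if i == j then E i else 0) &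
      \sum_j E j = 1%:M].

Definition is_subfield (K : algC -> Prop) : Prop :=
  [/\ K 0 /\ K 1,
      (forall x y, K x -> K y -> K (x + y)),
      (forall x, K x -> K (- x)),
      (forall x y, K x -> K y -> K (x * y)) &
      (forall x, K x -> K x^-1)].

(* Splitting field: the smallest subfield of algC containing all eigenvalues
   of A_1..A_d (it contains Q, and A_0 = I has eigenvalue 1 only). *)
Definition splitting_field n d (R : 'I_n -> 'I_n -> 'I_d.+1) (x : algC) : Prop :=
  forall K, is_subfield K ->
    (forall (i : 'I_d.+1) a, i != ord0 -> eigenvalue (adjmx R i) a -> K a) -> K x.

Definition idem_sum n d (E : 'I_d.+1 -> 'M[algC]_n) (S : {set 'I_d.+1}) : 'M[algC]_n :=
  \sum_(j in S) E j.

Definition in_EK n d (K : algC -> Prop) (E : 'I_d.+1 -> 'M[algC]_n)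
    (S : {set 'I_d.+1}) : Prop :=
  forall u v, K (idem_sum E S u v).

Definition in_KEK n d (K : algC -> Prop) (E : 'I_d.+1 -> 'M[algC]_n)
    (M : 'M[algC]_n) : Prop :=
  exists a : {set 'I_d.+1} -> algC,
    (forall S, K (a S) /\ (a S = 0 \/ in_EK K E S)) /\
    M = \sum_(S : {set 'I_d.+1}) a S *: idem_sum E S.

Definition schur n (M N : 'M[algC]_n) : 'M[algC]_n :=
  \matrix_(u, v) (M u v * N u v).

Definition PropertyM n d (R : 'I_n -> 'I_n -> 'I_d.+1) (K : algC -> Prop) : Prop :=
  forall E, prim_idems R E ->
    forall M N, in_KEK K E M -> in_KEK K E N -> in_KEK K E (schur M N).

(* Main.v *)
Require Import Defs.
From mathcomp Require Import all_boot all_order all_algebra all_field.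
Set Implicit Arguments. Unset Strict Implicit. Unset Printing Implicit Defensive.
Import GRing.Theory Num.Theory.
Local Open Scope ring_scope.

Definition Kmx n (K : algC -> Prop) (A : 'M[algC]_n) := forall u v, K (A u v).

Lemma sf_sum (K : algC -> Prop) (I : Type) (r : seq I) (P : pred I) (F : I -> algC) :
  is_subfield K -> (forall i, P i -> K (F i)) -> K (\sum_(i <- r | P i) F i).
Proof. case=> [[K0 K1] KD KN KM KV] HF; exact: big_ind. Qed.

Lemma sf_01 (K : algC -> Prop) (b : bool) : is_subfield K -> K (b%:R).
Proof. by case=> [[K0 K1] KD KN KM KV]; case: b. Qed.

Lemma Kmx_sum n (K : algC -> Prop) (I : Type) (r : seq I) (P : pred I)
  (F : I -> 'M[algC]_n) :
  is_subfield K -> (forall i, P i -> Kmx K (F i)) -> Kmx K (\sum_(i <- r | P i) F i).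
Proof.
move=> HK HF u v; rewrite summxE; apply: sf_sum => // i Pi; exact: HF.
Qed.

Lemma Kmx_mul n (K : algC -> Prop) (A B : 'M[algC]_n) :
  is_subfield K -> Kmx K A -> Kmx K B -> Kmx K (A * B).
Proof.
move=> HK HA HB u v; rewrite -mulmxE mxE; apply: sf_sum => // i _.
by case: HK => _ _ _ KM _; apply: KM.
Qed.

Lemma Kmx_prod n (K : algC -> Prop) (I : Type) (r : seq I) (P : pred I)
  (F : I -> 'M[algC]_n) :
  is_subfield K -> (forall i, P i -> Kmx K (F i)) -> Kmx K (\prod_(i <- r | P i) F i).
Proof.
move=> HK HF; apply: big_ind => //.
- by move=> u v; rewrite mxE; apply: sf_01.
- by move=> x y; apply: Kmx_mul.
Qed.

Lemma Kmx_scale n (K : algC -> Prop) (a : algC) (A : 'M[algC]_n) :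
  is_subfield K -> K a -> Kmx K A -> Kmx K (a *: A).
Proof. by move=> [_ _ _ KM _] Ka HA u v; rewrite mxE; apply: KM. Qed.

Lemma Kmx_sub n (K : algC -> Prop) (A B : 'M[algC]_n) :
  is_subfield K -> Kmx K A -> Kmx K B -> Kmx K (A - B).
Proof. by move=> [_ KD KN _ _] HA HB u v; rewrite !mxE; apply: KD => //; apply: KN. Qed.

Definition Dg n d (E : 'I_d.+1 -> 'M[algC]_n) (c : 'I_d.+1 -> algC) : 'M[algC]_n :=
  \sum_j c j *: E j.

Lemma DgE n d (E : 'I_d.+1 -> 'M[algC]_n) (c : 'I_d.+1 -> algC) k :
  (forall i j, E i *m E j = if i == j then E i else 0) ->
  Dg E c *m E k = c k *: E k.
Proof.
move=> HO; rewrite /Dg mulmx_suml (bigD1 k) //= -scalemxAl HO eqxx big1 ?addr0 //.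
by move=> j /negbTE Hj; rewrite -scalemxAl HO Hj scaler0.
Qed.

Lemma Dg_mul n d (E : 'I_d.+1 -> 'M[algC]_n) (c c' : 'I_d.+1 -> algC) :
  (forall i j, E i *m E j = if i == j then E i else 0) ->
  Dg E c * Dg E c' = Dg E (fun j => c j * c' j).
Proof.
move=> HO; rewrite -mulmxE {2}/Dg mulmx_sumr /Dg; apply: eq_bigr => j _.
by rewrite -scalemxAr DgE // scalerA mulrC.
Qed.

Lemma Dg_scale n d (E : 'I_d.+1 -> 'M[algC]_n) (c : 'I_d.+1 -> algC) a :
  a *: Dg E c = Dg E (fun j => a * c j).
Proof. by rewrite /Dg scaler_sumr; apply: eq_bigr => j _; rewrite scalerA. Qed.

Lemma Dg_sub n d (E : 'I_d.+1 -> 'M[algC]_n) (c c' : 'I_d.+1 -> algC) :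
  Dg E c - Dg E c' = Dg E (fun j => c j - c' j).
Proof. by rewrite /Dg -sumrB; apply: eq_bigr => j _; rewrite scalerBl. Qed.

Lemma Dg_one n d (E : 'I_d.+1 -> 'M[algC]_n) :
  \sum_j E j = 1%:M -> Dg E (fun _ => 1) = 1%:M.
Proof. by move=> H1; rewrite /Dg -H1; apply: eq_bigr => j _; rewrite scale1r. Qed.

Lemma Dg_uniq n d (E : 'I_d.+1 -> 'M[algC]_n) (c c' : 'I_d.+1 -> algC) k :
  (forall i j, E i *m E j = if i == j then E i else 0) -> E k != 0 ->
  Dg E c = Dg E c' -> c k = c' k.
Proof.
move=> HO Hk Heq; have : c k *: E k = c' k *: E k by rewrite -!DgE // Heq.
move/eqP; rewrite -subr_eq0 -scalerBl scaler_eq0 (negbTE Hk) orbF subr_eq0.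
by move/eqP.
Qed.

Lemma idem_sumE n d (E : 'I_d.+1 -> 'M[algC]_n) S :
  idem_sum E S = Dg E (fun j => (j \in S)%:R).
Proof.
rewrite /idem_sum /Dg big_mkcond; apply: eq_bigr => j _.
by case: (j \in S); rewrite ?scale1r ?scale0r.
Qed.

Lemma KEK_Dg n d (E : 'I_d.+1 -> 'M[algC]_n) (a : {set 'I_d.+1} -> algC) :
  \sum_(S : {set 'I_d.+1}) a S *: idem_sum E S =
  Dg E (fun j => \sum_(S : {set 'I_d.+1}) a S * (j \in S)%:R).
Proof.
rewrite /Dg; under eq_bigr do rewrite idem_sumE /Dg scaler_sumr.
rewrite exchange_big; apply: eq_bigr => j _; rewrite scaler_suml.
by apply: eq_bigr => S _; rewrite scalerA.
Qed.

Lemma KEK_weak n d (K K' : algC -> Prop) (E : 'I_d.+1 -> 'M[algC]_n) M :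
  (forall x, K x -> K' x) -> in_KEK K E M -> in_KEK K' E M.
Proof.
move=> HKK [a [Ha ->]]; exists a; split => // S; have [H1 H2] := Ha S.
split; first exact: HKK.
by case: H2 => [->|H]; [left|right => u v; apply: HKK].
Qed.

Lemma KEK_Kmx n d (K : algC -> Prop) (E : 'I_d.+1 -> 'M[algC]_n) M :
  is_subfield K -> in_KEK K E M -> Kmx K M.
Proof.
move=> HK [a [Ha ->]]; apply: Kmx_sum => // S _; have [H1 H2] := Ha S.
case: H2 => [->|H]; first by rewrite scale0r => u v; rewrite mxE; case: HK => [[]].
exact: Kmx_scale.
Qed.

Lemma KEK_coef n d (K : algC -> Prop) (E : 'I_d.+1 -> 'M[algC]_n) M :
  is_subfield K -> in_KEK K E M ->
  exists c, (forall j, K (c j)) /\ M = Dg E c.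
Proof.
move=> HK [a [Ha ->]]; rewrite KEK_Dg; eexists; split; last reflexivity.
move=> j; apply: sf_sum => // S _; have [H1 _] := Ha S.
by case: HK (HK) => _ _ _ KM _ HK; apply: KM => //; apply: sf_01.
Qed.

Lemma Dg_ext n d (E : 'I_d.+1 -> 'M[algC]_n) (c c' : 'I_d.+1 -> algC) :
  (forall i, c i = c' i) -> Dg E c = Dg E c'.
Proof. by move=> H; apply: eq_bigr => i _; rewrite H. Qed.

Lemma Dg_prod n d (E : 'I_d.+1 -> 'M[algC]_n) (I : Type) (r : seq I) (P : pred I)
  (f : I -> 'I_d.+1 -> algC) :
  (forall i j, E i *m E j = if i == j then E i else 0) -> \sum_j E j = 1%:M ->
  \prod_(j <- r | P j) Dg E (f j) = Dg E (fun i => \prod_(j <- r | P j) f j i).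
Proof.
move=> HO H1; elim: r => [|x r IH].
  rewrite big_nil; transitivity (1%:M : 'M[algC]_n); first by [].
  rewrite -(Dg_one H1); apply: Dg_ext => i; by rewrite big_nil.
rewrite big_cons; case: (boolP (P x)) => Px.
  rewrite IH Dg_mul //; apply: Dg_ext => i; by rewrite big_cons Px.
rewrite IH; apply: Dg_ext => i; by rewrite big_cons (negbTE Px).
Qed.

Lemma level_EK n d (K : algC -> Prop) (E : 'I_d.+1 -> 'M[algC]_n) (z : 'I_d.+1 -> algC)
  (Z : 'M[algC]_n) k :
  is_subfield K ->
  (forall i j, E i *m E j = if i == j then E i else 0) -> \sum_j E j = 1%:M ->
  Kmx K Z -> Z = Dg E z -> (forall j, K (z j)) ->
  in_EK K E [set i | z i == z k].
Proof.
move=> HK HO H1 HZ EZ Hz; rewrite /in_EK.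
have -> : idem_sum E [set i | z i == z k] =
  \prod_(j | z j != z k) ((z k - z j)^-1 *: (Z - z j *: 1%:M)).
  have Hf j : (z k - z j)^-1 *: (Z - z j *: 1%:M) =
      Dg E (fun i => (z k - z j)^-1 * (z i - z j * 1)).
    by rewrite EZ -(Dg_one H1) Dg_scale Dg_sub Dg_scale.
  under [RHS]eq_bigr do rewrite Hf.
  rewrite Dg_prod // idem_sumE; apply: Dg_ext => i; rewrite inE.
  case: (boolP (z i == z k)) => Hi.
    rewrite big1 // => j Hj; rewrite mulr1 (eqP Hi) mulVf //.
    by rewrite subr_eq0 eq_sym.
  rewrite (bigD1 i) //= mulr1 subrr mulr0 mul0r //.
apply: Kmx_prod => // j _; apply: Kmx_scale => //.
  case: HK => _ KD KN _ KV; apply: KV; apply: KD => //; exact: KN.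
apply: Kmx_sub => //; apply: Kmx_scale => // u v; rewrite mxE; exact: sf_01.
Qed.

Theorem proposition3p10 (n d : nat) (R : 'I_n -> 'I_n -> 'I_d.+1)
    (K1 K2 : algC -> Prop) :
  comm_assoc_scheme R ->
  is_subfield K1 -> (forall x, K1 x -> splitting_field R x) ->
  is_subfield K2 -> (forall x, K2 x -> splitting_field R x) ->
  PropertyM R K1 -> PropertyM R K2 ->
  PropertyM R (fun x => K1 x /\ K2 x).
Proof.
move=> _ HK1 _ HK2 _ PM1 PM2 E HE M N HM HN.
have [_ Hnz HO H1] := HE.
set Z := schur M N.
have Z1 : in_KEK K1 E Z.
  apply: (PM1 E HE M N); [apply: (KEK_weak _ HM) | apply: (KEK_weak _ HN)]; by move=> x [].
have Z2 : in_KEK K2 E Z.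
  apply: (PM2 E HE M N); [apply: (KEK_weak _ HM) | apply: (KEK_weak _ HN)]; by move=> x [].
have [z [Hz1 Ez]] := KEK_coef HK1 Z1.
have [z2 [Hz2' Ez2]] := KEK_coef HK2 Z2.
have Hz2 j : K2 (z j).
  by rewrite (Dg_uniq HO (Hnz j) (etrans (esym Ez) Ez2)).
have HZ1 := KEK_Kmx HK1 Z1.
have HZ2 := KEK_Kmx HK2 Z2.
pose b (S : {set 'I_d.+1}) :=
  if [pick k | S == [set i | z i == z k]] is Some k then z k else 0.
exists b; split.
  move=> S; rewrite /b; case: pickP => [k /eqP HS | _].
    split; first by split.
    right; rewrite HS => u v; split.
      exact: (level_EK k HK1 HO H1 HZ1 Ez Hz1).
    exact: (level_EK k HK2 HO H1 HZ2 Ez Hz2).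
  by split; [case: HK1 => [[]]; case: HK2 => [[]] | left].
rewrite KEK_Dg Ez; apply: Dg_ext => j.
rewrite (bigD1 [set i | z i == z j]) //= big1.
  rewrite inE eqxx mulr1 addr0 /b; case: pickP => [k /eqP HS | /(_ j)].
    have : j \in [set i | z i == z j] by rewrite inE.
    by rewrite HS inE => /eqP.
  by rewrite eqxx.
move=> S HS; case: (boolP (j \in S)) => Hj; last by rewrite mulr0.
rewrite /b; case: pickP => [k /eqP HSk | _]; last by rewrite mul0r.
move: Hj HS; rewrite HSk inE => /eqP Hjk; rewrite Hjk.
by rewrite eqxx.
Qed.
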